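(* Let $B_k$ ($k\ge2$) be a generalized Bethe tree with parameters $n_1,\dots,n_k$, $d_1,\dots,d_k$, $m_1,\dots,m_{k-1}$ as in the context, let $\alpha\in[0,1]$ and $\beta=1-\alpha$. Define polynomials $P_0(\lambda)=1$, $P_1(\lambda)=\lambda-\alpha$, and \[ P_j(\lambda)=(\lambda-\alpha d_j)P_{j-1}(\lambda)-\beta^2m_{j-1}P_{j-2}(\lambda)\quad (j=2,\dots,k). \] Then the characteristic polynomial $\phi(\lambda)=\det(\lambda I-A_\alpha(B_k))$ satisfies \[ \phi(\lambda)=P_k(\lambda)\prod_{j=1}^{k-1}P_j(\lambda)^{n_j-n_{j+1}}. \]
   Context: For a graph $G$, $A(G)$ is the adjacency matrix, $D(G)$ the diagonal degree matrix, and $A_\alpha(G)=\alpha D(G)+(1-\alpha)A(G)$. In a rooted tree, the level of a vertex is its distance to the root plus one. A generalized Bethe tree $B_k$ is a rooted tree with $k$ levels in which all vertices at the same level have the same degree. For $j\in\{1,\dots,k\}$, $n_{k-j+1}$ denotes the number of vertices at level $j$ and $d_{k-j+1}$ their common degree (so index $1$ refers to the deepest level and index $k$ to the root; $d_1=1$, $n_k=1$). For $j\in\{1,\dots,k-1\}$, $m_j=n_j/n_{j+1}$ (a positive integer); one has $n_j=(d_{j+1}-1)n_{j+1}$ for $j\le k-2$ and $n_{k-1}=d_k=m_{k-1}$. *)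

(* Defs.v *)
From HB Require Import structures.
From mathcomp Require Import all_boot all_order all_algebra.
Set Implicit Arguments. Unset Strict Implicit. Unset Printing Implicit Defensive.
Import Order.TTheory GRing.Theory Num.Theory.

Definition simple_graph (N : nat) (e : rel 'I_N) : Prop :=
  symmetric e /\ irreflexive e.

Definition is_tree (N : nat) (e : rel 'I_N) : Prop :=
  (forall x y, connect e x y) /\
  ~ (exists c : seq 'I_N, [/\ uniq c, 3 <= size c & cycle e c]).

Definition gdeg (N : nat) (e : rel 'I_N) (x : 'I_N) : nat := #|[set y | e x y]|.

Definition ball (N : nat) (e : rel 'I_N) (x : 'I_N) (n : nat) : {set 'I_N} :=
  iter n (fun S => S :|: [set y | [exists z in S, e z y]]) [set x].

(* graph distance: least n (< N) with y in the n-ball of x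
   (equals N if y is unreachable; never happens in a connected graph). *)
Definition gdist (N : nat) (e : rel 'I_N) (x y : 'I_N) : nat :=
  find (fun n => y \in ball e x n) (iota 0 N).

Definition level (N : nat) (e : rel 'I_N) (r x : 'I_N) : nat := (gdist e r x).+1.

Local Open Scope ring_scope.

Definition adjmx (R : nzRingType) (N : nat) (e : rel 'I_N) : 'M[R]_N :=
  \matrix_(i, j) (e i j)%:R.
Definition degmx (R : nzRingType) (N : nat) (e : rel 'I_N) : 'M[R]_N :=
  \matrix_(i, j) ((i == j)%:R * (gdeg e i)%:R).
Definition A_alpha (R : nzRingType) (N : nat) (e : rel 'I_N) (alpha : R) : 'M[R]_N :=
  alpha *: degmx R e + (1 - alpha) *: adjmx R e.

Fixpoint bethe_P (R : nzRingType) (alpha : R) (d m : nat -> nat) (j : nat)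
  : {poly R} :=
  match j with
  | 0 => 1
  | 1 => 'X - alpha%:P
  | S ((S j'') as j') =>
      ('X - (alpha * (d j)%:R)%:P) * bethe_P alpha d m j'
      - ((1 - alpha) ^+ 2 * (m j')%:R)%:P * bethe_P alpha d m j''
  end.

(* Main.v *)
Require Import Defs.
From HB Require Import structures.
From mathcomp Require Import all_boot all_order all_algebra.
From mathcomp Require Import zify ring fingroup perm fraction.
Import Order.TTheory GRing.Theory Num.Theory.

Section Alg.
Local Open Scope ring_scope.



Lemma det_lvl (F : fieldType) (n : nat) (A : 'M[F]_n) (f : 'I_n -> nat) :
  (forall i j, i != j -> A i j != 0 -> (f i < f j)%N) -> \det A = \prod_i A i i.
Proof.
move=> H; rewrite /determinant (bigD1 (1%g : 'S_n)) //= [X in _ + X]big1 ?addr0.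
  by rewrite odd_perm1 expr0 mul1r; apply: eq_bigr => i _; rewrite perm1.
move=> s ns1; apply/eqP; rewrite mulf_eq0; apply/orP; right.
apply/prodf_eq0.
case: (boolP [exists i, A i (s i) == 0]) => [/existsP[i Hi]|]; first by exists i.
rewrite negb_exists => /forallP allnz; exfalso.
have le i : (f i <= f (s i))%N.
  case: (eqVneq i (s i)) => [<-|ne] //; apply: ltnW; apply: H => //; exact: allnz.
have sumeq : (\sum_i f (s i) = \sum_i f i)%N.
  by rewrite [RHS](reindex_inj (@perm_inj _ s)).
have : (\sum_i (f (s i) - f i) == 0)%N.
  move: sumeq; rewrite -(eq_bigr _ (fun i _ => subnK (le i))) big_split /=.
  by move/eqP; rewrite -{2}[(\sum_i f i)%N]add0n eqn_add2r.
rewrite sum_nat_eq0 => /forallP all0.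
move/eqP: ns1; apply; apply/permP => i; rewrite perm1.
case: (eqVneq (s i) i) => // ne.
have ne' : i != s i by rewrite eq_sym.
have := H i (s i) ne' (allnz i).
by have := all0 i; rewrite subn_eq0 => /= h1 h2; move: (leq_trans h2 h1); rewrite ltnn.
Qed.

Lemma det_tree (F : fieldType) (n : nat) (M : 'M[F]_n) (p : 'I_n -> 'I_n) (rt : 'I_n)
  (f : 'I_n -> nat) (rv : 'I_n -> F) (b : F) :
  (forall x, x != rt -> f x = (f (p x)).+1) -> (forall x, rv x != 0) ->
  (forall a c, M a c = (a == c)%:R * (rv a + \sum_(x | (x != rt) && (p x == a)) b ^+ 2 / rv x)
      - b * ((a != rt) && (p a == c))%:R - b * ((c != rt) && (p c == a))%:R) ->
  \det M = \prod_i rv i.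
Proof.
move=> Hf Hrv HM.
have chaa a : ((a != rt) && (p a == a)) = false.
  apply/negP => /andP[ar /eqP pa]; have := Hf a ar; rewrite pa; lia.
have chab a c : ((a != rt) && (p a == c)) -> ((c != rt) && (p c == a)) = false.
  move=> /andP[ar /eqP pa]; apply/negP => /andP[cr /eqP pc].
  have := Hf a ar; have := Hf c cr; rewrite pa pc => ->; lia.
pose L := \matrix_(a, x) ((x == a)%:R + ((x != rt) && (p x == a))%:R * (- b / rv x)) : 'M[F]_n.
have -> : M = L *m diag_mx (\row_i rv i) *m L^T.
  apply/matrixP => a c; rewrite mul_mx_diag !mxE HM; symmetry.
  under eq_bigr do rewrite !mxE.
  case: (eqVneq a c) => [<-|ac].
    rewrite (bigD1 a) //= chaa eqxx /= !mul0r !addr0 mul1r mulr1 !mulr0 !subr0 mul1r.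
    congr (_ + _); rewrite [LHS]big_mkcond [RHS]big_mkcond; apply: eq_bigr => x _ /=.
    case: (eqVneq x a) => [->|xa]; first by rewrite chaa.
    case: ((x != rt) && (p x == a)); rewrite /= ?mulr0n ?mulr1n ?mul0r ?add0r ?mul1r ?mul0r //.
    field; exact: Hrv.
  rewrite (bigD1 a) //= (bigD1 c) //=; last by rewrite eq_sym.
  rewrite big1 ?addr0; last first.
    move=> x /andP[xa xc]; rewrite (negbTE xa) (negbTE xc).
    case E : ((x != rt) && (p x == a)); rewrite /= ?mulr0n ?mul0r ?add0r ?mul0r //.
    case E' : ((x != rt) && (p x == c)); rewrite /= ?mulr0n ?mul0r ?add0r ?mulr0 //.
    move: E E' => /andP[_ /eqP pa] /andP[_ /eqP pc].
    by move: ac; rewrite -pa -pc eqxx.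
  rewrite !eqxx !chaa (negbTE ac) (eq_sym c a) (negbTE ac) /= ?mulr0n ?mulr1n.
  have := Hrv a; have := Hrv c; move=> hc ha.
  by field; rewrite hc ha.
rewrite !det_mulmx det_tr det_diag.
have -> : \det L = 1.
  rewrite (@det_lvl _ _ _ f).
    by apply: big1 => i _; rewrite mxE eqxx chaa /= ?mulr0n mul0r addr0.
  move=> a x ax; rewrite mxE (eq_sym x) (negbTE ax).
  case E : ((x != rt) && (p x == a)); first last.
    by rewrite /= ?mulr0n mul0r addr0 eqxx.
  by move: E => /andP[xr /eqP pa] _; rewrite (Hf x xr) pa.
by rewrite mul1r mulr1; apply: eq_bigr => i _; rewrite mxE.
Qed.



Lemma bethe_monic (R : nzRingType) (alpha : R) (d m : nat -> nat) j :
  (bethe_P alpha d m j \is monic /\ size (bethe_P alpha d m j) = j.+1) /\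
  (bethe_P alpha d m j.+1 \is monic /\ size (bethe_P alpha d m j.+1) = j.+2).
Proof.
elim: j => [|j [[m0 s0] [m1 s1]]].
  by rewrite /= monic1 size_poly1 monicXsubC size_XsubC.
split => //.
have m2 : ('X - (alpha * (d j.+2)%:R)%:P) * bethe_P alpha d m j.+1 \is monic.
  by rewrite monicMl // monicXsubC.
have s2 : size (('X - (alpha * (d j.+2)%:R)%:P) * bethe_P alpha d m j.+1) = j.+3.
  by rewrite size_monicM ?monicXsubC ?size_XsubC ?s1 // -size_poly_eq0 s1.
have s3 : (size (((1 - alpha) ^+ 2 * (m j.+1)%:R)%:P * bethe_P alpha d m j)%R < j.+3)%N.
  rewrite mul_polyC; apply: (leq_ltn_trans (size_scale_leq _ _)); by rewrite s0.
have -> : bethe_P alpha d m j.+2 = ('X - (alpha * (d j.+2)%:R)%:P) * bethe_P alpha d m j.+1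
      - ((1 - alpha) ^+ 2 * (m j.+1)%:R)%:P * bethe_P alpha d m j by [].
rewrite -size_polyN -s2 in s3.
split; first by rewrite monicE lead_coefDl // -monicE.
by rewrite size_polyDl // s2.
Qed.

Lemma telescope (F : fieldType) (Q : nat -> F) (n : nat -> nat) K :
  Q 0%N = 1 -> (forall j, Q j != 0) -> (forall j, (1 <= j < K)%N -> (n j.+1 <= n j)%N) ->
  \prod_(1 <= j < K.+1) (Q j / Q j.-1) ^+ n j =
  Q K ^+ n K * \prod_(1 <= j < K) Q j ^+ (n j - n j.+1).
Proof.
move=> Q0 Qn; elim: K => [|K IH] Hn.
  by rewrite !big_geq // Q0 expr1n mulr1.
rewrite big_nat_recr //= IH; last by move=> j hj; apply: Hn; lia.
case: K IH Hn => [|K] IH Hn.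
  by rewrite !big_geq // Q0 expr1n !mul1r mulr1 divr1.
rewrite [in RHS]big_nat_recr //=.
have le : (n K.+2 <= n K.+1)%N by apply: Hn; lia.
rewrite -{1}(subnK le) exprD expr_div_n.
have h1 := expf_neq0 (n K.+2) (Qn K.+1).
have h2 := expf_neq0 (n K.+1 - n K.+2) (Qn K.+1).
set A := \prod_(1 <= i < K.+1) _.
set x := Q K.+1 ^+ (n K.+1 - n K.+2); set y := Q K.+1 ^+ n K.+2.
rewrite /= in y *.
by field.
Qed.

Lemma fid (F : fieldType) (T q1 q0 bb cc : F) : q1 != 0 -> q0 != 0 ->
  T = (T * q1 - bb ^+ 2 * cc * q0) / q1 + cc * (bb ^+ 2 / (q1 / q0)).
Proof. by move=> h1 h0; field; rewrite h1 h0. Qed.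

End Alg.


Section Tree.
Variables (N : nat) (e : rel 'I_N) (r : 'I_N).
Hypothesis se : symmetric e.
Hypothesis ie : irreflexive e.
Hypothesis conn : forall x y, connect e x y.
Hypothesis nocyc : ~ (exists c : seq 'I_N, [/\ uniq c, 3 <= size c & path.cycle e c]).

Local Notation B := (ball e r).
Local Notation D := (gdist e r).

Lemma ballS n : B n.+1 = B n :|: [set y | [exists z in B n, e z y]].
Proof. by []. Qed.

Lemma ball0 : B 0 = [set r]. Proof. by []. Qed.

Lemma ball_path n z p : z \in B n -> path e z p -> last z p \in B (n + size p).
Proof.
elim: p n z => [|y p IH] n z /=; first by rewrite addn0.
move=> zB /andP[ezy pp]; rewrite addnS -addSn; apply: IH pp.
rewrite ballS inE; apply/orP; right; rewrite inE; apply/existsP; exists z.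
by rewrite zB ezy.
Qed.

Lemma reach y : exists2 n, n < N & y \in B n.
Proof.
have /connectP[p pp ->] := conn r y.
case/shortenP: pp => p' pp' up' _.
exists (size p').
  have := max_card (mem (r :: p')); rewrite card_ord (card_uniqP up') /=.
  by [].
have := ball_path 0 r p'; rewrite add0n; apply => //.
by rewrite ball0 set11.
Qed.

Lemma has_reach y : has (fun n => y \in B n) (iota 0 N).
Proof.
have [n nN yB] := reach y; apply/hasP; exists n => //.
by rewrite mem_iota add0n nN.
Qed.

Lemma Dlt y : D y < N.
Proof.
have := has_reach y; rewrite has_find size_iota; by [].
Qed.

Lemma Dball y : y \in B (D y).
Proof.
have := nth_find 0 (has_reach y).
by rewrite nth_iota ?add0n //; apply: Dlt.
Qed.

Lemma Dmin {y n} : y \in B n -> D y <= n.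
Proof.
move=> yB; case: (leqP (D y) n) => // lt.
have := before_find 0 lt.
by rewrite nth_iota ?add0n ?yB //; apply: (ltn_trans lt); apply: Dlt.
Qed.

Lemma Dr : D r = 0.
Proof. by apply/eqP; rewrite -leqn0; apply: Dmin; rewrite ball0 set11. Qed.

Lemma D0 {y} : D y = 0 -> y = r.
Proof. by move=> h; have := Dball y; rewrite h ball0 => /set1P. Qed.

Lemma Dedge {z y} : e z y -> D y <= (D z).+1.
Proof.
move=> ezy; apply: Dmin; rewrite ballS inE; apply/orP; right.
rewrite inE; apply/existsP; exists z; by rewrite Dball ezy.
Qed.

Lemma Dpar {y} : y != r -> exists z, e y z && ((D z).+1 == D y).
Proof.
move=> yr; have Dy := Dball y.
case Dyq : (D y) Dy => [|n]; first by move/eqP: yr; case; apply: D0.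
rewrite ballS inE => /orP[yn|].
  by have := Dmin yn; rewrite Dyq ltnn.
rewrite inE => /existsP[z /andP[zB ezy]].
exists z; rewrite se ezy /=.
have := Dmin zB; have := Dedge ezy; rewrite Dyq => h1 h2.
apply/eqP; congr S; apply/eqP; rewrite eqn_leq h2 /=; by [].
Qed.

Definition par y := odflt y [pick z | e y z && ((D z).+1 == D y)].

Lemma par_spec {y} : y != r -> e y (par y) /\ (D (par y)).+1 = D y.
Proof.
move=> yr; rewrite /par; case: pickP => [z /andP[? /eqP ?]|none] //=.
by have [z] := Dpar yr; rewrite none.
Qed.

Lemma noconf h a b q : a != b -> D a = h -> D b = h ->
  all (fun z => h < D z) q -> uniq q -> path e a (rcons q b) -> False.
Proof.
elim: h a b q => [|h IH] a b q ab Da Db aq uq pq.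
  by move: ab; rewrite (D0 Da) (D0 Db) eqxx.
have ar : a != r by apply/eqP=> ar; rewrite ar Dr in Da.
have br : b != r by apply/eqP=> br; rewrite br Dr in Db.
have [ea Dpa] := par_spec ar; have [eb Dpb] := par_spec br.
rewrite Da in Dpa; rewrite Db in Dpb; case: Dpa => Dpa; case: Dpb => Dpb.
have aq' : a \notin q by apply/negP => /(allP aq) /=; rewrite Da ltnn.
have bq' : b \notin q by apply/negP => /(allP aq) /=; rewrite Db ltnn.
have u : uniq (a :: rcons q b).
  by rewrite /= mem_rcons in_cons negb_or ab aq' rcons_uniq bq' uq.
have hall : all (fun z => h < D z) (a :: rcons q b).
  rewrite /= all_rcons Da Db ltnSn /=.
  by apply: sub_all aq => z /= /ltnW.
case: (eqVneq (par a) (par b)) => [eqp|neqp].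
  apply: nocyc; exists (par a :: a :: rcons q b); split.
  - rewrite cons_uniq u andbT; apply/negP => /(allP hall) /=.
    by rewrite Dpa ltnn.
  - by rewrite /= size_rcons.
    rewrite /= rcons_path last_rcons pq eqp eb andbT.
    by rewrite se -eqp ea.
apply: (IH (par a) (par b) (a :: rcons q b)) => //.
by rewrite /= se ea /= rcons_path pq last_rcons eb.
Qed.

Lemma edgeD {x y} : e x y -> (D y = (D x).+1) \/ (D x = (D y).+1).
Proof.
move=> exy; have h1 := Dedge exy; have h2 : D x <= (D y).+1.
  by apply: Dedge; rewrite se.
case: (ltngtP (D x) (D y)) => [lt|gt|eq].
- by left; apply/eqP; rewrite eqn_leq h1 lt.
- by right; apply/eqP; rewrite eqn_leq h2 gt.
exfalso; apply: (noconf (D x) x y [::]) => //.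
  by apply/eqP => xy; move: exy; rewrite xy ie.
by rewrite /= exy.
Qed.

Lemma par_uniq {x y} : x != r -> e x y -> (D y).+1 = D x -> y = par x.
Proof.
move=> xr exy Dy; have [ep Dp] := par_spec xr.
apply/eqP; apply/negPn/negP => ne.
apply: (noconf (D y) y (par x) [:: x]) => //.
- by rewrite -Dy in Dp; case: Dp.
- by rewrite /= -Dy ltnSn.
- by rewrite /= se exy ep.
Qed.

Definition ch a := [set x | (x != r) && (par x == a)].

Lemma Dch {a x} : x \in ch a -> D x = (D a).+1.
Proof. by rewrite inE => /andP[xr /eqP <-]; have [_ ->] := par_spec xr. Qed.

Lemma par_neq {a} : a != r -> par a != a.
Proof.
move=> ar; have [_ Dp] := par_spec ar; apply/eqP => h.
by rewrite h in Dp; move/eqP: Dp; rewrite (gtn_eqF (ltnSn _)).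
Qed.

Lemma adj {a c} : a != c ->
  e a c = ((a != r) && (par a == c)) || ((c != r) && (par c == a)).
Proof.
move=> ac; apply/idP/idP.
  move=> eac; case: (edgeD eac) => h.
  - have cr : c != r by apply/eqP => cr; rewrite cr Dr in h.
    by rewrite (par_uniq cr _ (esym h)) ?eqxx ?cr ?orbT // se.
  - have ar : a != r by apply/eqP => ar; rewrite ar Dr in h.
    by rewrite -(par_uniq ar eac (esym h)) eqxx ar.
case/orP => /andP[xr /eqP <-]; first by case: (par_spec xr).
by rewrite se; case: (par_spec xr).
Qed.

Lemma gdeg_ch a : gdeg e a = #|ch a| + (a != r).
Proof.
rewrite /gdeg; case: (eqVneq a r) => [->|ar].
  rewrite addn0; apply: eq_card => y; rewrite !inE.
  case: (eqVneq r y) => [<-|ry]; first by rewrite ie.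
  by rewrite adj // eqxx /= eq_sym ry.
have -> : [set y | e a y] = par a |: ch a.
  apply/setP => y; rewrite !inE.
  case: (eqVneq a y) => [<-|ay]; first by rewrite ie (eq_sym a) (negbTE (par_neq ar)) andbF.
  by rewrite (adj ay) ar /= (eq_sym y).
rewrite (cardsU1 (par a) (ch a)) addnC; congr (_ + _).
have -> : par a \notin ch a; last by [].
apply/negP => /Dch; have [_ <-] := par_spec ar.
by move/eqP; rewrite -addn2 -[X in X == _]addn0 eqn_add2l.
Qed.

Lemma card_next h : #|[set x | D x == h.+1]| = \sum_(a | D a == h) #|ch a|.
Proof.
rewrite -sum1_card (partition_big par (fun a => D a == h)).
  apply: eq_bigr => a /eqP Da; rewrite -sum1_card; apply: eq_bigl => x.
  rewrite !inE; apply/andP/andP => [[/eqP Dx pa]|[xr pa]].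
    split => //; apply/eqP => xr; by rewrite xr Dr in Dx.
  split => //; have [_ <-] := par_spec xr; by rewrite (eqP pa) Da.
move=> x; rewrite inE => /eqP Dx.
have xr : x != r by apply/eqP => xr; rewrite xr Dr in Dx.
have [_] := par_spec xr; rewrite Dx; by case=> ->.
Qed.

Lemma anc {x} i : i <= D x -> exists y, D y = D x - i.
Proof.
elim: i => [|i IH] le; first by exists x; rewrite subn0.
have [y Dy] := IH (ltnW le).
have yr : y != r by apply/eqP => yr; rewrite yr Dr in Dy; lia.
have [_ Dp] := par_spec yr; exists (par y); lia.
Qed.



Variables (R : realFieldType) (k : nat) (n d : nat -> nat) (alpha : R).
Hypothesis k2 : (2 <= k)%N.
Hypothesis lev : forall x, (level e r x <= k)%N.
Hypothesis ex : exists x, level e r x = k.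
Hypothesis sdeg : forall x y, level e r x = level e r y -> gdeg e x = gdeg e y.
Hypothesis hn : forall j, (1 <= j <= k)%N -> n j = #|[set x | level e r x == (k - j).+1]|.
Hypothesis hd : forall x, gdeg e x = d (k - level e r x).+1.

Lemma Dk x : D x < k.
Proof. by have := lev x; rewrite /level. Qed.

Definition cnt h := #|[set x | D x == h]|.

Lemma hn' j : (1 <= j <= k)%N -> n j = cnt (k - j).
Proof. by move=> hj; rewrite hn //; apply: eq_card => x; rewrite !inE /level eqSS. Qed.

Lemma chsame a a' : D a = D a' -> #|ch a| = #|ch a'|.
Proof.
move=> Daa'; have := sdeg a a'; rewrite /level Daa' => /(_ erefl).
rewrite !gdeg_ch.
have -> : (a != r) = (a' != r).
  congr negb; apply/eqP/eqP => h; apply: D0.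
    by rewrite -Daa' h Dr.
  by rewrite Daa' h Dr.
by move/addIn.
Qed.

Lemma cnt_next h a : D a = h -> cnt h.+1 = cnt h * #|ch a|.
Proof.
move=> Da; rewrite /cnt card_next.
rewrite (eq_bigr (fun _ => #|ch a|)); last by move=> a' /eqP Da'; apply: chsame; rewrite Da'.
rewrite -sum_nat_const; apply: eq_bigl => x; by rewrite inE.
Qed.

Lemma cnt_pos h : (h < k)%N -> (0 < cnt h)%N.
Proof.
move=> hk; have [x lx] := ex; move: lx; rewrite /level => Dx.
have le : (k.-1 - h <= D x)%N by lia.
have [y Dy] := anc _ le.
rewrite /cnt card_gt0; apply/set0Pn; exists y; rewrite inE Dy; apply/eqP; lia.
Qed.

Lemma cnt0 : cnt 0 = 1%N.
Proof.
rewrite /cnt -(cards1 r); apply: eq_card => x; rewrite !inE.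
by apply/eqP/eqP => [/D0|->] //; rewrite Dr.
Qed.
Local Open Scope ring_scope.

Lemma main_thm :
  char_poly (A_alpha e alpha) =
    bethe_P alpha d (fun j => (n j %/ n j.+1)%N) k *
    \prod_(1 <= j < k) bethe_P alpha d (fun j => (n j %/ n j.+1)%N) j ^+ (n j - n j.+1)%N.
Proof.
set m := fun j => (n j %/ n j.+1)%N.
pose P := bethe_P alpha d m.
pose Q j : {fraction {poly R}} := tofrac (P j).
have Qn j : Q j != 0.
  rewrite /Q tofrac_eq0; have [[mo _] _] := bethe_monic _ alpha d m j; exact: monic_neq0.
apply/eqP; rewrite -tofrac_eq; apply/eqP.
rewrite /char_poly -det_map_mx.
pose rv x := Q (k - D x)%N / Q (k - D x).-1.
pose b : {fraction {poly R}} := tofrac ((1 - alpha)%:P).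
rewrite (@det_tree _ _ _ par r D rv b).
- have grp : \prod_i rv i = \prod_(i < k) (Q (k - i)%N / Q (k - i).-1) ^+ cnt i.
    rewrite (partition_big (fun i => Ordinal (Dk i)) xpredT) //=.
    apply: eq_bigr => j _; rewrite /cnt -prodr_const.
    apply: eq_big => i.
      by rewrite inE /=; apply/eqP/eqP => [<-|h] //; apply: val_inj.
    by rewrite /rv => /eqP <-.
  rewrite grp -(big_mkord xpredT (fun i => (Q (k - i)%N / Q (k - i).-1) ^+ cnt i)).
  rewrite big_nat_rev /=.
  rewrite (eq_big_nat _ _ (F2 := fun i => (Q i.+1 / Q i) ^+ n i.+1)); last first.
    move=> i /andP[_ ik]; rewrite add0n.
    have -> : (k - (k - i.+1))%N = i.+1 by lia.
    by rewrite (hn' i.+1) //; lia.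
  have <- : \prod_(1 <= j < k.+1) (Q j / Q j.-1) ^+ n j = \prod_(0 <= i < k) (Q i.+1 / Q i) ^+ n i.+1.
    by rewrite big_add1.
  rewrite telescope //.
  + rewrite (hn' k) ?subnn ?cnt0 ?expr1 //; last by lia.
    rewrite rmorphM rmorph_prod; congr (_ * _); apply: eq_bigr => j _.
    by rewrite rmorphXn.
  move=> j /andP[j1 jk]; rewrite (hn' j) ?(hn' j.+1); try lia.
  have -> : (k - j = (k - j.+1).+1)%N by lia.
  have hk : (k - j.+1 < k)%N by lia.
  have := cnt_pos _ hk; rewrite /cnt card_gt0 => /set0Pn [a].
  rewrite inE => /eqP Da; have := cnt_next _ _ Da.
  rewrite /cnt => ->; apply: leq_pmulr.
  have hk' : ((k - j.+1).+1 < k)%N by lia.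
  have := cnt_pos _ hk'.
  rewrite (cnt_next _ _ Da) muln_gt0 => /andP[]; by [].
- by move=> x xr; have [_ <-] := par_spec xr.
- by move=> x; rewrite /rv mulf_neq0 ?invr_neq0.
move=> a c; rewrite !mxE.
case: (eqVneq a c) => [<-|ac].
  have aa : (a != r) && (par a == a) = false.
    by case: (eqVneq a r) => // ar; rewrite (negbTE (par_neq ar)) andbF.
  rewrite ?eqxx ie aa /= ?mulr0n ?mulr1n ?mul1r ?mulr0 ?addr0 ?subr0.
  have sum : \sum_(x | (x != r) && (par x == a)) b ^+ 2 / rv x =
      (#|ch a|)%:R * (b ^+ 2 / (Q (k - (D a).+1)%N / Q (k - (D a).+1).-1)).
    rewrite mulr_natl -sumr_const; apply: eq_big => x; first by rewrite inE.
    by move=> xch; rewrite /rv (Dch (a := a) (x := x)) // inE.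
  rewrite sum /rv; have Dka := Dk a.
  case: (ltnP (D a).+1 k) => [lt|ge].
    have [j' ej] : exists j', (k - D a)%N = j'.+2 by exists (k - D a - 2)%N; lia.
    have ej1 : (k - (D a).+1)%N = j'.+1 by lia.
    rewrite ej ej1 /=.
    have dg : gdeg e a = d j'.+2 by rewrite hd /level; congr d; lia.
    have cm : #|ch a| = m j'.+1.
      rewrite /m (hn' j'.+1) ?(hn' j'.+2); try lia.
      have -> : (k - j'.+1 = (D a).+1)%N by lia.
      have -> : (k - j'.+2 = (D a))%N by lia.
      rewrite (cnt_next (D a) a) // mulKn //; apply: cnt_pos; lia.
    have eP : Q j'.+2 = tofrac ('X - (alpha * (d j'.+2)%:R)%:P) * Q j'.+1
        - tofrac (((1 - alpha) ^+ 2 * (m j'.+1)%:R)%:P) * Q j'.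
      by rewrite /Q -!tofracM -tofracB.
    rewrite dg cm eP.
    have -> : tofrac (((1 - alpha) ^+ 2 * (m j'.+1)%:R)%:P) = b ^+ 2 * (m j'.+1)%:R.
      by rewrite polyCM rmorphXn tofracM tofracXn polyC_natr rmorph_nat.
    have h1 := Qn j'; have h2 := Qn j'.+1.
    clear sum; move: (tofrac _) (Q j'.+1) (Q j') h2 h1 b ((m j'.+1)%:R) => T q1 q0 h2 h1 bb cc.
    exact: (@fid _ T q1 q0 bb cc h2 h1).
  have Da : D a = k.-1 by lia.
  have c0 : #|ch a| = 0%N.
    apply: eq_card0 => x; apply/negbTE/negP => /Dch Dx; have := Dk x; lia.
  have ar : a != r by apply/eqP => ar; rewrite ar Dr in Da; lia.
  rewrite gdeg_ch c0 ar mul0r addr0.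
  have -> : (k - D a)%N = 1%N by lia.
  by rewrite /Q /P /= tofrac1 divr1 mulr1.
rewrite (adj ac) /= mulr0n !mul0r mulr0 add0r sub0r.
case X : ((a != r) && (par a == c)); case Y : ((c != r) && (par c == a)).
- move: X Y => /andP[ar /eqP pa] /andP[cr /eqP pc]; exfalso.
  have [_ h1] := par_spec cr; have [_ h2] := par_spec ar.
  rewrite pc in h1; rewrite pa in h2; lia.
all: rewrite /= ?mulr1n ?mulr0n ?mulr1 ?mulr0 ?subr0 ?add0r ?sub0r ?opprK ?oppr0 ?rmorphN ?tofrac0.
all: rewrite ?sub0r; rewrite /b //.
Qed.

End Tree.

Local Open Scope ring_scope.

Theorem theorem4 (R : realFieldType) (N k : nat) (e : rel 'I_N) (r : 'I_N)
    (n d : nat -> nat) (alpha : R) :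
  simple_graph e -> is_tree e ->
  (2 <= k)%N ->
  (forall x, (level e r x <= k)%N) ->
  (exists x, level e r x = k) ->
  (forall x y, level e r x = level e r y -> gdeg e x = gdeg e y) ->
  (forall j, (1 <= j <= k)%N ->
     n j = #|[set x | level e r x == (k - j).+1]|) ->
  (forall x, gdeg e x = d (k - level e r x).+1) ->
  0 <= alpha <= 1 ->
  let m := fun j => (n j %/ n j.+1)%N in
  char_poly (A_alpha e alpha) =
    bethe_P alpha d m k *
    \prod_(1 <= j < k) bethe_P alpha d m j ^+ (n j - n j.+1)%N.
Proof.
move=> [se ie] [conn nocyc] k2 lev ex sdeg hn hd _ m.
exact: (@main_thm N e r se ie conn nocyc R k n d alpha k2 lev ex sdeg hn hd).
Qed.
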